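(* Let $(\gamma_i)_{i=0}^{n+1}$ be a linear sequence of geodesics in $\mathbb{H}^2$, and define $u_i$ ($0\le i\le n$) and $v_i$ ($1 \le i \le n$) as in the context. Let $D = d(\gamma_0, \gamma_{n+1})$. Suppose $u_0, u_n \le 1$. Then $$\Big| \sum_{i=1}^n v_i \Big| \le D + 2\log D - \log u_0 - \log u_n + 3.$$
   Context: A linear sequence of geodesics in $\mathbb{H}^2$ is a sequence of pairwise disjoint geodesics, consecutive ones having a common orthogonal, such that each geodesic separates those before it from those after it. Each $\gamma_i$ is oriented so that the geodesics following it lie to its left. Let $\eta_i$ be the common orthogonal of $\gamma_i$ and $\gamma_{i+1}$, oriented from $\gamma_i$ to $\gamma_{i+1}$; $u_i>0$ is the length of $\eta_i$ (the distance from $\gamma_i$ to $\gamma_{i+1}$), and $v_i$ is the signed distance along $\gamma_i$ (with its orientation) from the foot of $\eta_{i-1}$ on $\gamma_i$ to the foot of $\eta_i$ on $\gamma_i$. $d(\gamma_0,\gamma_{n+1})$ is the distance between the two geodesics. *)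

(* Defs.v *)
(* hyperboloid model of the hyperbolic plane H^2. *)
From Stdlib Require Import Reals Lra List.
Open Scope R_scope.

Record V3 := mkV { v0 : R; v1 : R; v2 : R }.

Definition vadd (x y : V3) : V3 := mkV (v0 x + v0 y) (v1 x + v1 y) (v2 x + v2 y).
Definition vscale (r : R) (x : V3) : V3 := mkV (r * v0 x) (r * v1 x) (r * v2 x).

Definition mink (x y : V3) : R := - v0 x * v0 y + v1 x * v1 y + v2 x * v2 y.

Definition is_pt (x : V3) : Prop := mink x x = -1 /\ 0 < v0 x.

Definition acosh (y : R) : R := ln (y + sqrt (y * y - 1)).

Definition hdist (x y : V3) : R := acosh (- mink x y).

(* An oriented geodesic, given by a unit-speed (arclength) parametrization
   s |-> cosh s * p + sinh s * t, with p a point and t a unit tangent at p. *)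
Record line := mkLine { lp : V3; lt : V3 }.

Definition is_line (l : line) : Prop :=
  is_pt (lp l) /\ mink (lp l) (lt l) = 0 /\ mink (lt l) (lt l) = 1.

Definition gpos (l : line) (s : R) : V3 :=
  vadd (vscale (cosh s) (lp l)) (vscale (sinh s) (lt l)).

Definition gvel (l : line) (s : R) : V3 :=
  vadd (vscale (sinh s) (lp l)) (vscale (cosh s) (lt l)).

Definition on_line (l : line) (x : V3) : Prop := exists s, x = gpos l s.

Definition det3 (x y z : V3) : R :=
  v0 x * (v1 y * v2 z - v2 y * v1 z)
  - v1 x * (v0 y * v2 z - v2 y * v0 z)
  + v2 x * (v0 y * v1 z - v1 y * v0 z).

(* Left / right open half-planes of an oriented geodesic (orientation of H^2
   induced by the standard one on the (x1,x2)-plane); det3 (gpos l s) (gvel l s) x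
   is independent of s. *)
Definition left_of (l : line) (x : V3) : Prop := 0 < det3 (gpos l 0) (gvel l 0) x.
Definition right_of (l : line) (x : V3) : Prop := det3 (gpos l 0) (gvel l 0) x < 0.

Definition is_inf (S : R -> Prop) (D : R) : Prop :=
  (forall d, S d -> D <= d) /\ (forall m, (forall d, S d -> m <= d) -> m <= D).

Definition geod_dist (l1 l2 : line) (D : R) : Prop :=
  is_inf (fun d => exists x y, on_line l1 x /\ on_line l2 y /\ d = hdist x y) D.

Definition sum_from1 (n : nat) (v : nat -> R) : R :=
  fold_right Rplus 0 (map v (seq 1 n)).

(* Main.v *)
Require Import Defs.
From Stdlib Require Import Reals Lra Psatz List Lia.
Open Scope R_scope.

Definition nrm (l : line) : V3 :=
  let p := lp l in let t := lt l in
  mkV (-(v1 p * v2 t - v2 p * v1 t)) (v2 p * v0 t - v0 p * v2 t) (v0 p * v1 t - v1 p * v0 t).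

Ltac vunf := unfold mink, det3, nrm, gpos, gvel, vadd, vscale; simpl.

Lemma ch2 x : cosh x * cosh x - sinh x * sinh x = 1.
Proof. unfold cosh, sinh. rewrite <- (exp_plus x (-x)) || idtac.
  assert (H: exp x * exp (-x) = 1). { rewrite <- exp_plus. replace (x + - x) with 0 by ring. apply exp_0. }
  field_simplify. nra. Qed.

Lemma cosh_add a b : cosh (a + b) = cosh a * cosh b + sinh a * sinh b.
Proof. unfold cosh, sinh. rewrite exp_plus. replace (- (a+b)) with (-a + -b) by ring.
  rewrite exp_plus. field. Qed.
Lemma sinh_add a b : sinh (a + b) = sinh a * cosh b + cosh a * sinh b.
Proof. unfold cosh, sinh. rewrite exp_plus. replace (- (a+b)) with (-a + -b) by ring.
  rewrite exp_plus. field. Qed.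

Lemma cosh_pos x : 0 < cosh x.
Proof. unfold cosh. pose proof (exp_pos x); pose proof (exp_pos (-x)). lra. Qed.
Lemma cosh_ge1 x : 1 <= cosh x.
Proof. pose proof (ch2 x); pose proof (cosh_pos x). nra. Qed.
Lemma sinh_pos x : 0 < x -> 0 < sinh x.
Proof. intro. rewrite <- sinh_0. apply sinh_lt. auto. Qed.

Lemma mink_sym x y : mink x y = mink y x.
Proof. unfold mink; ring. Qed.
Lemma mink_lin X a Y b Z : mink X (vadd (vscale a Y) (vscale b Z)) = a * mink X Y + b * mink X Z.
Proof. vunf. ring. Qed.
Lemma mink_linl X a Y b Z : mink (vadd (vscale a Y) (vscale b Z)) X = a * mink Y X + b * mink Z X.
Proof. vunf. ring. Qed.

Lemma gpos_0 l : gpos l 0 = lp l.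
Proof. unfold gpos, vadd, vscale. rewrite cosh_0, sinh_0. destruct (lp l); simpl. f_equal; ring. Qed.
Lemma gvel_0 l : gvel l 0 = lt l.
Proof. unfold gvel, vadd, vscale. rewrite cosh_0, sinh_0. destruct (lt l); simpl. f_equal; ring. Qed.

Section Frame.
Variable l : line.
Hypothesis Hl : is_line l.

Lemma F1 s : mink (gpos l s) (gpos l s) = -1.
Proof. destruct Hl as [[Hp _] [Hpt Htt]].
  assert (E: mink (gpos l s) (gpos l s) = cosh s * cosh s * mink (lp l) (lp l) + 2 * cosh s * sinh s * mink (lp l) (lt l) + sinh s * sinh s * mink (lt l) (lt l)) by (vunf; ring).
  rewrite E, Hp, Hpt, Htt. pose proof (ch2 s). nra. Qed.
Lemma F2 s : mink (gpos l s) (gvel l s) = 0.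
Proof. destruct Hl as [[Hp _] [Hpt Htt]].
  assert (E: mink (gpos l s) (gvel l s) = cosh s * sinh s * mink (lp l) (lp l) + (cosh s * cosh s + sinh s * sinh s) * mink (lp l) (lt l) + sinh s * cosh s * mink (lt l) (lt l)) by (vunf; ring).
  rewrite E, Hp, Hpt, Htt. ring. Qed.
Lemma F3 s : mink (gvel l s) (gvel l s) = 1.
Proof. destruct Hl as [[Hp _] [Hpt Htt]].
  assert (E: mink (gvel l s) (gvel l s) = sinh s * sinh s * mink (lp l) (lp l) + 2 * cosh s * sinh s * mink (lp l) (lt l) + cosh s * cosh s * mink (lt l) (lt l)) by (vunf; ring).
  rewrite E, Hp, Hpt, Htt. pose proof (ch2 s). nra. Qed.
Lemma F4 s y : det3 (gpos l s) (gvel l s) y = mink (nrm l) y.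
Proof. assert (E: det3 (gpos l s) (gvel l s) y = (cosh s * cosh s - sinh s * sinh s) * mink (nrm l) y) by (vunf; ring).
  rewrite E, ch2. ring. Qed.
Lemma F5a s : mink (nrm l) (gpos l s) = 0.
Proof. rewrite <- (F4 s). vunf. ring. Qed.
Lemma F5b s : mink (nrm l) (gvel l s) = 0.
Proof. rewrite <- (F4 s). vunf. ring. Qed.
Lemma F5c : mink (nrm l) (nrm l) = 1.
Proof. destruct Hl as [[Hp _] [Hpt Htt]].
  assert (E: mink (nrm l) (nrm l) = mink (lp l) (lt l) * mink (lp l) (lt l) - mink (lp l) (lp l) * mink (lt l) (lt l)) by (vunf; ring).
  rewrite E, Hp, Hpt, Htt. ring. Qed.
Lemma FI s y : mink (gpos l s) y ^ 2 - mink (gvel l s) y ^ 2 - mink (nrm l) y ^ 2 = - mink y y.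
Proof.
  assert (G: forall P V, - (det3 P V y) ^ 2 =
   mink P P * (mink V V * mink y y - mink V y * mink y V)
   - mink P V * (mink V P * mink y y - mink V y * mink y P)
   + mink P y * (mink V P * mink y V - mink V V * mink y P)) by (intros; unfold mink, det3; ring).
  specialize (G (gpos l s) (gvel l s)).
  rewrite F4 in G. rewrite (mink_sym (gvel l s) (gpos l s)) in G.
  rewrite (mink_sym y (gpos l s)), (mink_sym y (gvel l s)) in G.
  rewrite F1, F2, F3 in G. nra. Qed.
Lemma TRp X s s' : mink X (gpos l s') = cosh (s' - s) * mink X (gpos l s) + sinh (s' - s) * mink X (gvel l s).
Proof. replace s' with ((s' - s) + s) at 1 by ring. unfold gpos at 1. rewrite cosh_add, sinh_add.
  vunf. ring. Qed.
Lemma TRv X s s' : mink X (gvel l s') = sinh (s' - s) * mink X (gpos l s) + cosh (s' - s) * mink X (gvel l s).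
Proof. replace s' with ((s' - s) + s) at 1 by ring. unfold gvel at 1. rewrite cosh_add, sinh_add.
  vunf. ring. Qed.
Lemma left_iff x : left_of l x <-> 0 < mink (nrm l) x.
Proof. unfold left_of. rewrite (F4 0 x). reflexivity. Qed.
Lemma right_iff x : right_of l x <-> mink (nrm l) x < 0.
Proof. unfold right_of. rewrite (F4 0 x). reflexivity. Qed.
End Frame.

Lemma null_vec A z : mink A A = -1 -> mink z A = 0 -> mink z z = 0 -> z = mkV 0 0 0.
Proof. destruct A as [a0 a1 a2], z as [z0 z1 z2]; unfold mink; simpl; intros H1 H2 H3.
  assert (E1: z0 * a0 = z1*a1+z2*a2) by lra.
  assert (E2: z0 * z0 = z1*z1+z2*z2) by lra.
  assert (E3: a0 * a0 = 1 + a1*a1+a2*a2) by lra.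
  assert (C: (z1*a1+z2*a2)^2 <= (z1*z1+z2*z2)*(a1*a1+a2*a2)) by (pose proof (pow2_ge_0 (z1*a2 - z2*a1)); nra).
  rewrite <- E1, <- E2 in C.
  assert (z0 * z0 <= 0) by nra.
  assert (z0 = 0) by nra. subst. assert (z1 = 0) by nra. assert (z2 = 0) by nra. subst. reflexivity. Qed.

Lemma ln_le' x y : 0 < x -> x <= y -> ln x <= ln y.
Proof. intros Hx Hxy. destruct (Rle_lt_or_eq_dec _ _ Hxy) as [H|H].
  - left. apply ln_increasing; auto.
  - subst; lra. Qed.

Lemma acosh_mono p q : 1 <= p -> p <= q -> acosh p <= acosh q.
Proof. intros. unfold acosh. apply ln_le'.
  - pose proof (sqrt_pos (p*p-1)). lra.
  - pose proof (sqrt_le_1_alt (p*p-1) (q*q-1)). assert (p*p-1 <= q*q-1) by nra. specialize (H1 H2). lra. Qed.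

Lemma exp_acosh p : 1 <= p -> exp (acosh p) = p + sqrt (p*p-1).
Proof. intros. unfold acosh. apply exp_ln. pose proof (sqrt_pos (p*p-1)). lra. Qed.

Lemma sqrt_sq_id r : 0 <= r -> sqrt (r*r) = r.
Proof. intros. apply sqrt_lem_1; nra. Qed.

Lemma final_bound (N D S s0 sn u0 un : R) :
  0 < u0 -> 0 < un -> u0 / 2 <= s0 -> un / 2 <= sn ->
  1 + s0 * sn / 2 * exp (Rabs S) <= N -> acosh N <= D ->
  Rabs S <= D + 2 * ln D - ln u0 - ln un + 3.
Proof.
  intros Hu0 Hun Hs0 Hsn HN HD.
  assert (Hs0p: 0 < s0) by lra. assert (Hsnp: 0 < sn) by lra.
  pose proof (exp_pos (Rabs S)) as HeS.
  assert (HN1: 1 < N). { assert (0 < s0 * sn / 2 * exp (Rabs S)). { apply Rmult_lt_0_compat; [|auto]. nra. } lra. }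
  set (r := sqrt (N*N-1)).
  assert (Hr: 0 <= r) by apply sqrt_pos.
  assert (Hr2: r * r = N*N-1) by (apply sqrt_sqrt; nra).
  set (q := N + r).
  set (E := exp D).
  assert (HE: q <= E). { unfold E. assert (Hx: exp (acosh N) = q) by (unfold q, r; apply exp_acosh; lra). rewrite <- Hx.
     destruct (Rle_lt_or_eq_dec _ _ HD) as [H|H]. left; apply exp_increasing; auto. rewrite H; lra. }
  assert (Hq1: 1 < q) by (unfold q; lra).
  assert (HEpos: 0 < E) by apply exp_pos.
  assert (Hq: q * (N - r) = 1) by (unfold q; nra).
  assert (HcoshD: N <= (E + /E)/2).
  { assert (N = (q + /q)/2). { assert (/q = N - r). { apply (Rmult_eq_reg_l q); [|lra]. rewrite Rinv_r by lra. lra. } rewrite H. unfold q; lra. }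
    rewrite H.
    assert ((E + /E) - (q + /q) = (E - q) * (1 - /(E*q))). { field. lra. }
    assert (0 <= (E - q) * (1 - /(E*q))). { apply Rmult_le_pos. lra.
      assert (/(E*q) <= 1). { rewrite <- Rinv_1. apply Rinv_le_contravar. lra. nra. } lra. }
    lra. }
  assert (HDpos: 0 < D). { assert (1 < E) by lra. unfold E in H. rewrite <- exp_0 in H. apply exp_lt_inv in H. auto. }
  assert (HED: E - 1 <= D * E).
  { pose proof (exp_ineq1_le (-D)). rewrite exp_Ropp in H. fold E in H.
    assert (E * (1 + - D) <= E * / E) by (apply Rmult_le_compat_l; lra).
    rewrite Rinv_r in H0 by lra. nra. }
  assert (HC: (E + /E)/2 - 1 = (E-1)*(E-1)/(2*E)) by (field; lra).
  assert (HC2: (E-1)*(E-1)/(2*E) <= D*D*E/2).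
  { assert (0 <= E - 1) by lra.
    apply (Rmult_le_reg_r (2*E)). lra. unfold Rdiv. rewrite Rmult_assoc, Rinv_l by lra. nra. }
  assert (Hmain: s0 * sn / 2 * exp (Rabs S) <= D*D*E/2) by lra.
  assert (Hmain2: exp (Rabs S) <= D * D * E / (s0 * sn)).
  { apply (Rmult_le_reg_r (s0*sn)). nra. unfold Rdiv. rewrite Rmult_assoc, Rinv_l by nra. nra. }
  assert (He3: 4 <= exp 3) by (pose proof (exp_ineq1_le 3); lra).
  assert (Hmain3: exp (Rabs S) <= exp 3 * (D * D) * E * / u0 * / un).
  { eapply Rle_trans. apply Hmain2.
    assert (D * D * E / (s0*sn) <= 4 * (D*D) * E * / u0 * / un).
    { assert (u0 * un / 4 <= s0 * sn) by nra.
      assert (/(s0*sn) <= /(u0*un/4)) by (apply Rinv_le_contravar; nra).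
      assert (/(u0*un/4) = 4 * /u0 * /un) by (field; lra).
      assert (0 < D*D*E) by (apply Rmult_lt_0_compat; nra).
      unfold Rdiv. rewrite H1 in H0.
      replace (4 * (D*D) * E * /u0 * /un) with ((D*D*E) * (4 * /u0 * /un)) by ring.
      apply Rmult_le_compat_l; lra. }
    eapply Rle_trans. apply H.
    assert (0 <= (D*D) * E * / u0 * / un).
    { repeat apply Rmult_le_pos; try (left; apply Rinv_0_lt_compat); nra. }
    nra. }
  apply ln_le' in Hmain3; [|apply exp_pos].
  rewrite ln_exp in Hmain3.
  rewrite !ln_mult in Hmain3; try (apply Rinv_0_lt_compat; auto); try nra;
   try (repeat apply Rmult_lt_0_compat; try apply exp_pos; try apply Rinv_0_lt_compat; nra).
  rewrite !ln_Rinv, ln_exp in Hmain3 by auto. unfold E in Hmain3. rewrite ln_exp in Hmain3. lra.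
Qed.

Lemma final0 (D u0 : R) : 0 < u0 -> acosh (cosh u0) <= D ->
  0 <= D + 2 * ln D - ln u0 - ln u0 + 3.
Proof. intros Hu H.
  assert (E: acosh (cosh u0) = u0).
  { unfold acosh. pose proof (sinh_lt 0 u0 Hu). rewrite sinh_0 in H0.
    assert (Hc: cosh u0 * cosh u0 - 1 = sinh u0 * sinh u0).
    { unfold cosh, sinh. assert (exp u0 * exp (-u0) = 1) by (rewrite <- exp_plus; replace (u0 + - u0) with 0 by ring; apply exp_0).
      field_simplify. nra. }
    rewrite Hc, sqrt_sq_id by lra.
    replace (cosh u0 + sinh u0) with (exp u0) by (unfold cosh, sinh; field). apply ln_exp. }
  rewrite E in H. assert (ln u0 <= ln D) by (apply ln_le'; lra). lra. Qed.

Definition vsub (x y : V3) : V3 := vadd x (vscale (-1) y).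
Lemma vsub0 x y : vsub x y = mkV 0 0 0 -> x = y.
Proof. destruct x, y; unfold vsub, vadd, vscale; simpl. intro H; injection H; intros.
  f_equal; lra. Qed.
Lemma mink_vsub x y z : mink (vsub x y) z = mink x z - mink y z.
Proof. unfold mink, vsub, vadd, vscale; simpl; ring. Qed.
Lemma mink_vsub2 x y : mink (vsub x y) (vsub x y) = mink x x - 2 * mink x y + mink y y.
Proof. unfold mink, vsub, vadd, vscale; simpl; ring. Qed.
Lemma mink_scl a x y : mink (vscale a x) y = a * mink x y.
Proof. unfold mink, vscale; simpl; ring. Qed.
Lemma mink_scr a x y : mink x (vscale a y) = a * mink x y.
Proof. unfold mink, vscale; simpl; ring. Qed.

Lemma upper l s : is_line l -> 0 < v0 (gpos l s).
Proof. intros [[Hp Hp0] [Hpt Htt]]. unfold gpos, vadd, vscale; simpl.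
  destruct (lp l) as [p0 p1 p2], (lt l) as [t0 t1 t2]; unfold mink in *; simpl in *.
  pose proof (ch2 s) as Hc. pose proof (cosh_pos s) as Hcp.
  set (C := cosh s) in *. set (S := sinh s) in *.
  assert (E1: p0 * t0 = p1*t1+p2*t2) by lra.
  assert (Cs: (p1*t1+p2*t2)^2 <= (p1*p1+p2*p2)*(t1*t1+t2*t2)) by (pose proof (pow2_ge_0 (p1*t2 - p2*t1)); nra).
  rewrite <- E1 in Cs.
  assert (Ht0: t0 * t0 <= p0 * p0 - 1) by nra.
  assert (H2: (C*p0)*(C*p0) - (S*t0)*(S*t0) > 0) by nra.
  assert (0 < C * p0) by nra.
  nra. Qed.

Lemma negmink x y : 0 < v0 x -> 0 < v0 y -> mink x x = -1 -> mink y y = -1 -> 0 < - mink x y.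
Proof. destruct x as [x0 x1 x2], y as [y0 y1 y2]; unfold mink; simpl; intros.
  assert (Cs: (x1*y1+x2*y2)^2 <= (x1*x1+x2*x2)*(y1*y1+y2*y2)) by (pose proof (pow2_ge_0 (x1*y2 - x2*y1)); nra).
  assert ((x1*y1+x2*y2)^2 < (x0*y0)^2) by nra.
  assert (0 < x0*y0) by nra. nra. Qed.

Lemma turn (gk gk1 h : line) (a b u : R) :
  is_line gk -> is_line gk1 -> is_line h -> 0 < u ->
  gpos h 0 = gpos gk a -> gpos h u = gpos gk1 b ->
  mink (gvel h 0) (gvel gk a) = 0 -> mink (gvel h u) (gvel gk1 b) = 0 ->
  left_of gk (gpos gk1 b) ->
  gpos gk1 b = vadd (vscale (cosh u) (gpos gk a)) (vscale (sinh u) (nrm gk)) /\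
  exists sg, (sg = 1 \/ sg = -1) /\ gvel gk1 b = vscale sg (gvel gk a) /\
    nrm gk1 = vscale sg (vadd (vscale (sinh u) (gpos gk a)) (vscale (cosh u) (nrm gk))) /\
    (right_of gk1 (gpos gk a) -> sg = 1).
Proof.
  intros Hk Hk1 Hh Hu E0 Eu O0 Ou Hlft.
  set (B := gpos gk a) in *. set (TB := gvel gk a) in *. set (N := nrm gk) in *.
  rewrite gpos_0 in E0. rewrite gvel_0 in O0.
  set (w := lt h) in *.
  pose proof (sinh_pos u Hu) as Hs. pose proof (ch2 u) as Hc. pose proof (cosh_pos u) as Hcp.
  set (c := cosh u) in *. set (s := sinh u) in *.
  assert (EA: gpos h u = vadd (vscale c B) (vscale s w)) by (unfold gpos; rewrite E0; reflexivity).
  assert (EW: gvel h u = vadd (vscale s B) (vscale c w)) by (unfold gvel; rewrite E0; reflexivity).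
  assert (NB: mink N B = 0) by (apply F5a; auto).
  assert (NTB: mink N TB = 0) by (apply F5b; auto).
  assert (NN: mink N N = 1) by (apply F5c; auto).
  assert (BB: mink B B = -1) by (apply F1; auto).
  assert (BTB: mink B TB = 0) by (apply F2; auto).
  assert (TBTB: mink TB TB = 1) by (apply F3; auto).
  destruct Hh as [[Hp _] [Hpw Hww]]. fold w in Hpw, Hww. rewrite E0 in Hpw. fold B in Hpw.
  apply left_iff in Hlft; auto. rewrite <- Eu, EA, mink_lin in Hlft. fold N in Hlft. rewrite NB in Hlft.
  assert (Nw: 0 < mink N w) by nra.
  pose proof (FI gk Hk a w) as FIw. fold B TB N in FIw.
  rewrite Hpw, (mink_sym TB w), O0, Hww in FIw.
  assert (Nw1: mink N w = 1) by nra.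
  assert (Ew: w = N).
  { apply vsub0. apply (null_vec B). auto. rewrite mink_vsub, (mink_sym w B), Hpw, NB. ring.
    rewrite mink_vsub2, Hww, (mink_sym w N), Nw1, NN. ring. }
  rewrite Ew in EA, EW.
  split. { rewrite <- Eu, EA. reflexivity. }
  set (A := gpos gk1 b) in *. set (TA := gvel gk1 b) in *.
  assert (AA: mink A A = -1) by (apply F1; auto).
  assert (ATA: mink A TA = 0) by (apply F2; auto).
  assert (TATA: mink TA TA = 1) by (apply F3; auto).
  assert (EA': A = vadd (vscale c B) (vscale s N)) by (rewrite <- Eu, EA; reflexivity).
  rewrite EW in Ou.
  assert (ATA0 := ATA).
  rewrite EA' in ATA. rewrite mink_linl in ATA. rewrite mink_linl in Ou.
  assert (BTA: mink B TA = 0) by nra.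
  assert (NTA: mink N TA = 0) by nra.
  pose proof (FI gk Hk a TA) as FIt. fold B TB N in FIt.
  rewrite BTA, NTA, TATA in FIt.
  set (sg := mink TB TA) in *.
  assert (Hsg: sg * sg = 1) by nra.
  assert (TBA: mink TB A = 0).
  { rewrite EA', mink_lin, (mink_sym TB B), BTB, (mink_sym TB N), NTB. ring. }
  assert (ETA: TA = vscale sg TB).
  { apply vsub0. apply (null_vec A). auto.
    rewrite mink_vsub, mink_scl, (mink_sym TA A), ATA0, TBA. ring.
    rewrite mink_vsub2; repeat rewrite ?mink_scl, ?mink_scr; rewrite TATA, TBTB, (mink_sym TA TB). fold sg. nra. }
  set (W := vadd (vscale s B) (vscale c N)).
  assert (WA: mink W A = 0).
  { unfold W. rewrite EA', mink_linl, !mink_lin, BB, NB, NN, (mink_sym B N), NB. ring. }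
  assert (WW: mink W W = 1).
  { unfold W. rewrite mink_linl, !mink_lin, BB, NB, NN, (mink_sym B N), NB. nra. }
  assert (N1W: mink (nrm gk1) W = sg).
  { rewrite <- (F4 gk1 b W). fold A TA. rewrite ETA, EA'. unfold W.
    assert (forall X Y Z, det3 (vadd (vscale c X) (vscale s Y)) (vscale sg Z) (vadd (vscale s X) (vscale c Y)) = sg * (c*c - s*s) * det3 X Z Y) by (intros; unfold det3, vadd, vscale; simpl; ring).
    rewrite H, Hc. unfold B, TB. rewrite (F4 gk a). fold N. rewrite NN. ring. }
  assert (N1A: mink (nrm gk1) A = 0) by (apply F5a; auto).
  assert (EN1: nrm gk1 = vscale sg W).
  { apply vsub0. apply (null_vec A). auto.
    rewrite mink_vsub, mink_scl, N1A, WA. ring.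
    rewrite mink_vsub2; repeat rewrite ?mink_scl, ?mink_scr; rewrite N1W, WW, (F5c gk1 Hk1). nra. }
  exists sg. split. { destruct (Rmult_integral (sg - 1) (sg + 1)) as [H|H]; [nra | left; lra | right; lra]. }
  split. exact ETA. split. exact EN1.
  intro Hr. apply right_iff in Hr; auto. rewrite EN1, mink_scl in Hr. unfold W in Hr.
  rewrite mink_linl, BB, NB in Hr.
  assert (0 < sg) by nra. nra.
Qed.

Lemma sinh_ge x : 0 <= x -> x / 2 <= sinh x.
Proof. intros Hx. unfold sinh.
  pose proof (exp_ineq1_le x). pose proof (exp_pos (-x)).
  assert (exp (-x) * exp x = 1) by (rewrite <- exp_plus; replace (-x + x) with 0 by ring; apply exp_0).
  assert (exp (-x) * (1 + x) <= 1) by nra.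
  assert (exp (-x) <= 1 - x + x * x) by nra.
  assert (exp x - exp (-x) >= x).
  { assert ((exp x - exp (-x)) * (1 + x) >= x * (1 + x)) by nra. nra. }
  lra. Qed.

Lemma trans_pm X l s s' :
  mink X (gpos l s') + mink X (gvel l s') = exp (s' - s) * (mink X (gpos l s) + mink X (gvel l s)) /\
  mink X (gpos l s') - mink X (gvel l s') = exp (- (s' - s)) * (mink X (gpos l s) - mink X (gvel l s)).
Proof. rewrite (TRp l X s s'), (TRv l X s s'). unfold cosh, sinh. split; field. Qed.

Lemma fold_plus_acc (l : list R) x : fold_right Rplus x l = fold_right Rplus 0 l + x.
Proof. induction l; simpl; [ring | rewrite IHl; ring]. Qed.

Lemma sum_S k v : sum_from1 (S k) v = sum_from1 k v + v (S k).
Proof. unfold sum_from1. rewrite seq_S, map_app, fold_right_app. simpl.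
  rewrite fold_plus_acc. replace (1 + k)%nat with (S k) by lia. ring. Qed.

Lemma last_step (g0 gn gn1 h : line) (a b u : R) :
  is_line g0 -> is_line gn -> is_line gn1 -> is_line h -> 0 < u ->
  gpos h 0 = gpos gn a -> gpos h u = gpos gn1 b ->
  mink (gvel h 0) (gvel gn a) = 0 -> mink (gvel h u) (gvel gn1 b) = 0 ->
  left_of gn (gpos gn1 b) ->
  Rabs (mink (nrm g0) (gvel gn a)) <= mink (nrm g0) (gpos gn a) -> 1 <= mink (nrm g0) (nrm gn) ->
  forall x y, on_line g0 x -> on_line gn1 y ->
   acosh (sinh u * mink (nrm g0) (gpos gn a) + cosh u * mink (nrm g0) (nrm gn)) <= hdist x y.
Proof.
  intros H0 Hn Hn1 Hh Hu E0 Eu O0 Ou Hl Hbe Hnu x y [t' ->] [t ->].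
  destruct (turn gn gn1 h a b u Hn Hn1 Hh Hu E0 Eu O0 Ou Hl) as [EA [sg [Hsg [ETA _]]]].
  set (X := nrm g0) in *.
  set (al := mink X (gpos gn a)) in *. set (be := mink X (gvel gn a)) in *. set (nu := mink X (nrm gn)) in *.
  pose proof (ch2 u) as Hc. pose proof (cosh_ge1 u) as Hc1. pose proof (sinh_pos u Hu) as Hs.
  set (c := cosh u) in *. set (s := sinh u) in *.
  assert (HA: mink X (gpos gn1 b) = c * al + s * nu) by (rewrite EA, mink_lin; reflexivity).
  assert (HTA: mink X (gvel gn1 b) = sg * be) by (rewrite ETA, mink_scr; reflexivity).
  pose proof (FI gn Hn a X) as FIX. assert (XX: mink X X = 1) by (apply F5c; auto). rewrite (mink_sym (gpos gn a) X), (mink_sym (gvel gn a) X), XX in FIX.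
  fold al be in FIX. rewrite (mink_sym (nrm gn) X) in FIX. fold nu in FIX.
  assert (Hal: 0 <= al) by (pose proof (Rabs_pos be); lra).
  assert (Hbe2: be * be <= al * al) by (unfold Rabs in Hbe; destruct (Rcase_abs be); nra).
  set (Nn := s * al + c * nu).
  assert (HN1: 1 <= Nn) by (unfold Nn; nra).
  pose proof (TRp gn1 X b t) as HY. rewrite HA, HTA in HY.
  pose proof (ch2 (t - b)) as Hc'.
  set (C := cosh (t - b)) in *. set (S := sinh (t - b)) in *.
  set (fy := mink X (gpos gn1 t)) in *.
  assert (Hsg2: sg * sg = 1) by (destruct Hsg; subst; ring).
  assert (Hfy: fy * fy >= Nn * Nn - 1).
  { assert (Nn * Nn - 1 = (c*al+s*nu)*(c*al+s*nu) - be*be) by (unfold Nn; nra).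
    assert (fy * fy - ((c*al+s*nu)*(c*al+s*nu) - be*be) = (S*(c*al+s*nu) + C*sg*be)^2).
    { rewrite HY. set (al2 := c*al+s*nu).
      assert (Id: (C * al2 + S * (sg * be)) * (C * al2 + S * (sg * be)) - (al2 * al2 - be * be) - (S * al2 + C * sg * be) ^ 2
        = (C*C - S*S - 1) * (al2*al2 - sg*sg*be*be) + (1 - sg*sg)*be*be) by ring.
      rewrite Hc', Hsg2 in Id. lra. }
    pose proof (pow2_ge_0 (S*(c*al+s*nu) + C*sg*be)). lra. }
  pose proof (FI g0 H0 t' (gpos gn1 t)) as FIy. rewrite (F1 gn1 Hn1 t) in FIy.
  fold X in FIy. fold fy in FIy.
  assert (Hneg: 0 < - mink (gpos g0 t') (gpos gn1 t)).
  { apply negmink; try apply upper; auto; apply F1; auto. }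
  set (m := mink (gpos g0 t') (gpos gn1 t)) in *.
  assert (m * m >= Nn * Nn) by nra.
  assert (Nn <= - m) by nra.
  unfold hdist. fold m. apply acosh_mono; lra.
Qed.

Theorem lemmaA13 (n : nat) (g : nat -> line) (h : nat -> line)
  (a b u : nat -> R) (D : R)
  (Hg : forall i, (i <= n + 1)%nat -> is_line (g i))
  (Hdisj : forall i j, (i <= n + 1)%nat -> (j <= n + 1)%nat -> i <> j ->
     forall x, on_line (g i) x -> ~ on_line (g j) x)
  (Hleft : forall i k, (i < k)%nat -> (k <= n + 1)%nat ->
     forall x, on_line (g k) x -> left_of (g i) x)
  (Hsep : forall j i, (j < i)%nat -> (i <= n)%nat ->
     forall x, on_line (g j) x -> right_of (g i) x)
  (Heta : forall i, (i <= n)%nat ->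
     is_line (h i) /\ 0 < u i /\
     gpos (h i) 0 = gpos (g i) (a i) /\
     gpos (h i) (u i) = gpos (g (S i)) (b i) /\
     mink (gvel (h i) 0) (gvel (g i) (a i)) = 0 /\
     mink (gvel (h i) (u i)) (gvel (g (S i)) (b i)) = 0)
  (HD : geod_dist (g 0%nat) (g (n + 1)%nat) D)
  (Hu0 : u 0%nat <= 1) (Hun : u n <= 1) :
  Rabs (sum_from1 n (fun i => a i - b (i - 1)%nat))
    <= D + 2 * ln D - ln (u 0%nat) - ln (u n) + 3.
Proof.
  set (v := fun i => a i - b (i - 1)%nat).
  set (X := nrm (g 0%nat)).
  assert (Hg0 : is_line (g 0%nat)) by (apply Hg; lia).
  assert (XX : mink X X = 1) by (apply F5c; auto).
  assert (Tk : forall k, (k <= n)%nat ->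
     gpos (g (S k)) (b k) = vadd (vscale (cosh (u k)) (gpos (g k) (a k))) (vscale (sinh (u k)) (nrm (g k))) /\
     exists sg, (sg = 1 \/ sg = -1) /\ gvel (g (S k)) (b k) = vscale sg (gvel (g k) (a k)) /\
       nrm (g (S k)) = vscale sg (vadd (vscale (sinh (u k)) (gpos (g k) (a k))) (vscale (cosh (u k)) (nrm (g k)))) /\
       ((S k <= n)%nat -> sg = 1)).
  { intros k Hk. destruct (Heta k Hk) as (Hh & Hu & E0 & Eu & O0 & Ou).
    destruct (turn (g k) (g (S k)) (h k) (a k) (b k) (u k)) as [EA [sg [Hsg [ETA [EN Hor]]]]];
      try apply Hg; try lia; auto.
    - apply (Hleft k (S k)); try lia. exists (b k); reflexivity.
    - split; auto. exists sg. repeat split; auto. intro Hkn. apply Hor. apply (Hsep k (S k)); try lia.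
      exists (a k); reflexivity. }
  assert (Hlast : Rabs (mink X (gvel (g n) (a n))) <= mink X (gpos (g n) (a n)) -> 1 <= mink X (nrm (g n)) ->
     acosh (sinh (u n) * mink X (gpos (g n) (a n)) + cosh (u n) * mink X (nrm (g n))) <= D).
  { intros Hb Hn. destruct HD as [_ HDg]. apply HDg. intros d [x [y [Hx [Hy ->]]]].
    destruct (Heta n (le_n n)) as (Hh & Hu & E0 & Eu & O0 & Ou).
    rewrite Nat.add_1_r in Hy.
    apply (last_step (g 0%nat) (g n) (g (S n)) (h n) (a n) (b n) (u n)); auto; try apply Hg; try lia.
    apply (Hleft n (S n)); try lia. exists (b n); reflexivity. }
  destruct n as [|n'].
  -
    assert (Hb0: mink X (gvel (g 0%nat) (a 0%nat)) = 0) by (apply F5b).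
    assert (Ha0: mink X (gpos (g 0%nat) (a 0%nat)) = 0) by (apply F5a).
    fold X in Hlast. rewrite Hb0, Ha0, XX, Rabs_R0 in Hlast.
    assert (acosh (cosh (u 0%nat)) <= D) by (replace (cosh (u 0%nat)) with (sinh (u 0%nat) * 0 + cosh (u 0%nat) * 1) by ring; apply Hlast; lra).
    unfold sum_from1. simpl. rewrite Rabs_R0.
    destruct (Heta 0%nat (le_n 0)) as (_ & Hu & _).
    apply final0; auto.
  - set (m := S n') in *.
    destruct (Heta 0%nat ltac:(lia)) as (_ & Hu0p & _).
    pose proof (sinh_pos _ Hu0p) as Hs0.
    set (s0 := sinh (u 0%nat)) in *.
    assert (Ind: forall k, (1 <= k <= m)%nat ->
      s0 * exp (sum_from1 k v) <= mink X (gpos (g k) (a k)) + mink X (gvel (g k) (a k)) /\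
      s0 * exp (- sum_from1 k v) <= mink X (gpos (g k) (a k)) - mink X (gvel (g k) (a k)) /\
      1 <= mink X (nrm (g k))).
    { induction k as [|k IH]; intros Hk; [lia|].
      destruct (Tk k ltac:(lia)) as [EA [sg [Hsg [ETA [EN Hor]]]]].
      assert (sg = 1) by (apply Hor; lia). subst sg.
      destruct (Heta k ltac:(lia)) as (_ & Hu & _).
      pose proof (ch2 (u k)) as Hc. pose proof (cosh_ge1 (u k)) as Hc1. pose proof (sinh_pos _ Hu) as Hs.
      destruct (trans_pm X (g (S k)) (b k) (a (S k))) as [Tp Tm].
      rewrite sum_S.
      replace (v (S k)) with (a (S k) - b k) by (unfold v; replace (S k - 1)%nat with k by lia; reflexivity).
      rewrite EA, mink_lin in Tp, Tm. rewrite ETA, mink_scr in Tp, Tm.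
      rewrite EN, mink_scr, mink_lin.
      destruct k as [|k].
      + fold X. rewrite (F5a (g 0%nat)), (F5b (g 0%nat)) in Tp, Tm. fold X in Tp, Tm. rewrite XX in Tp, Tm.
        fold X. rewrite (F5a (g 0%nat)), XX.
        unfold sum_from1; simpl. fold s0 in Tp, Tm.
        rewrite Tp, Tm. pose proof (exp_pos (a 1%nat - b 0%nat)). pose proof (exp_pos (- (a 1%nat - b 0%nat))).
        rewrite Rplus_0_l. split; [right; ring | split; [right; ring | lra]].
      + destruct (IH ltac:(lia)) as (IH1 & IH2 & IH3).
        set (al := mink X (gpos (g (S k)) (a (S k)))) in *.
        set (be := mink X (gvel (g (S k)) (a (S k)))) in *.
        set (nu := mink X (nrm (g (S k)))) in *.
        set (Sk := sum_from1 (S k) v) in *.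
        set (vv := a (S (S k)) - b (S k)) in *.
        rewrite Tp, Tm. rewrite exp_plus, Ropp_plus_distr, exp_plus.
        pose proof (exp_pos vv). pose proof (exp_pos (-vv)). pose proof (exp_pos Sk). pose proof (exp_pos (-Sk)).
        assert (0 < al) by nra.
        assert (al + be <= 1 * (cosh (u (S k)) * al + sinh (u (S k)) * nu) + 1 * be) by nra.
        assert (al - be <= 1 * (cosh (u (S k)) * al + sinh (u (S k)) * nu) - 1 * be) by nra.
        repeat split.
        * replace (s0 * (exp Sk * exp vv)) with (exp vv * (s0 * exp Sk)) by ring.
          apply Rmult_le_compat_l; lra.
        * replace (s0 * (exp (-Sk) * exp (-vv))) with (exp (-vv) * (s0 * exp (-Sk))) by ring.
          apply Rmult_le_compat_l; lra.
        * nra. }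
    destruct (Ind m ltac:(lia)) as (I1 & I2 & I3).
    set (al := mink X (gpos (g m) (a m))) in *.
    set (be := mink X (gvel (g m) (a m))) in *.
    set (nu := mink X (nrm (g m))) in *.
    fold v. set (Sm := sum_from1 m v) in *.
    pose proof (exp_pos Sm). pose proof (exp_pos (-Sm)).
    assert (Hb: Rabs be <= al) by (apply Rabs_le; nra).
    specialize (Hlast Hb I3).
    destruct (Heta m ltac:(lia)) as (_ & Hunp & _).
    pose proof (sinh_pos _ Hunp) as Hsn. pose proof (cosh_ge1 (u m)).
    apply (final_bound (sinh (u m) * al + cosh (u m) * nu) D Sm s0 (sinh (u m)) (u 0%nat) (u m)); auto.
    + apply sinh_ge; lra.
    + apply sinh_ge; lra.
    + assert (s0 * exp (Rabs Sm) <= 2 * al).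
      { unfold Rabs; destruct (Rcase_abs Sm); nra. }
      assert (1 <= cosh (u m) * nu) by nra.
      nra.
Qed.
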